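(* There does not exist an unconditionally secure QPKE scheme. More precisely, for every (correct) QPKE scheme $(\mathsf{SKGen},\mathsf{PKGen},\mathsf{Enc},\mathsf{Dec})$ there is a computationally unbounded adversary which, in the everlasting-security experiment (receiving a single copy of the public key), recovers the encrypted message $m$ with certainty; in particular the trace distance between the experiment outputs for $m=0$ and $m=1$ equals $1$ for this adversary.
   Context: A QPKE scheme consists of: a PPT algorithm $\mathsf{SKGen}(1^\lambda)$ outputting a classical secret key $\mathsf{sk}$; a QPT algorithm $\mathsf{PKGen}(\mathsf{sk})$ outputting a (possibly mixed) quantum state $\rho$ and a classical string $\mathsf{pk}$; a QPT algorithm $\mathsf{Enc}(\rho,\mathsf{pk},m)$ outputting a ciphertext $\mathsf{ct}$ for $m\in\{0,1\}$; a QPT algorithm $\mathsf{Dec}(\mathsf{sk},\mathsf{ct})$ outputting $m\in\{0,1\}$. Correctness: for all $\lambda$ and $m$, $\Pr[\mathsf{Dec}(\mathsf{sk},\mathsf{Enc}(\rho,\mathsf{pk},m))=m]=1$ where $\mathsf{sk}\gets\mathsf{SKGen}(1^\lambda)$, $(\rho,\mathsf{pk})\gets\mathsf{PKGen}(\mathsf{sk})$. The everlasting-security experiment $\mathsf{Exp}^{\mathcal A}(1^\lambda,m)$: sample $\mathsf{sk}\gets\mathsf{SKGen}(1^\lambda)$, $(\rho,\mathsf{pk})\gets\mathsf{PKGen}(\mathsf{sk})$, give $(\rho,\mathsf{pk})$ to $\mathcal A$, which returns a modified public-key register and an internal register; compute $\mathsf{ct}$ by applying $\mathsf{Enc}(\cdot,\mathsf{pk},m)$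 (with the original $\mathsf{pk}$) to the returned register; output the joint state of $\mathsf{ct}$ and the internal register. Unconditional security would require the trace distance between the outputs for $m=0$ and $m=1$ to be negligible for all adversaries $\mathcal A$, including computationally unbounded ones. *)

(* Defs.v *)
From mathcomp Require Import all_boot all_order all_algebra.
From mathcomp Require Import mxtens.
Set Implicit Arguments.
Unset Strict Implicit.
Unset Printing Implicit Defensive.
Import Order.TTheory GRing.Theory Num.Theory.
Local Open Scope ring_scope.

Definition mxadj (C : numClosedFieldType) m n (A : 'M[C]_(m, n)) : 'M[C]_(n, m) :=
  (map_mx Num.conj A)^T.

Definition psdmx (C : numClosedFieldType) n (A : 'M[C]_n) : Prop :=
  forall v : 'rV[C]_n, 0 <= (v *m A *m mxadj v) 0 0.

Definition density (C : numClosedFieldType) n (rho : 'M[C]_n) : Prop :=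
  psdmx rho /\ \tr rho = 1.

(* a quantum channel (CPTP map) from dimension n to dimension m, given by a
   finite list of Kraus operators with sum_K K^dagger K = 1 *)
Definition is_channel (C : numClosedFieldType) n m (ks : seq 'M[C]_(m, n)) : Prop :=
  \sum_(K <- ks) mxadj K *m K = 1%:M.

Definition apply_channel (C : numClosedFieldType) n m (ks : seq 'M[C]_(m, n))
  (rho : 'M[C]_n) : 'M[C]_m :=
  \sum_(K <- ks) K *m rho *m mxadj K.

Definition tens_id (C : numClosedFieldType) n m a (ks : seq 'M[C]_(m, n))
  : seq 'M[C]_(m * a, n * a) :=
  [seq tensmx K (1%:M : 'M[C]_a) | K <- ks].

Definition povm2 (C : numClosedFieldType) n (E : bool -> 'M[C]_n) : Prop :=
  (forall b, psdmx (E b)) /\ E false + E true = 1%:M.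

Definition distribution (C : numClosedFieldType) (T : finType) (p : T -> C) : Prop :=
  (forall x, 0 <= p x) /\ \sum_x p x = 1.

(* trace norm of a normal (here: Hermitian) matrix: sum of the absolute values
   of its eigenvalues (spectral decomposition A = U^-1 diag(d) U) *)
Definition trnorm (C : numClosedFieldType) n (A : 'M[C]_n) : C :=
  \sum_i `|spectral_diag A 0 i|.

Definition trdist (C : numClosedFieldType) n (rho sigma : 'M[C]_n) : C :=
  2^-1 * trnorm (rho - sigma).

(* A QPKE scheme at a fixed security parameter.
   - skgen : distribution of the classical secret key sk : SK
   - pkgen sk pk : the (subnormalised) quantum public-key state rho on dK
       dimensions jointly with the classical public key pk, i.e. PKGen(sk)
       outputs pk with probability tr(pkgen sk pk) and then the state
       pkgen sk pk / tr(pkgen sk pk)  (a classical-quantum state)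
   - enc pk m : Kraus operators of the channel Enc(., pk, m) from the
       public-key register (dim dK) to the ciphertext register (dim dCT)
   - dec sk : the two-outcome measurement Dec(sk, .) on the ciphertext. *)
Record qpke (C : numClosedFieldType) := QPKE {
  SK : finType;
  PK : finType;
  dK : nat;
  dCT : nat;
  skgen : SK -> C;
  pkgen : SK -> PK -> 'M[C]_dK;
  enc : PK -> bool -> seq 'M[C]_(dCT, dK);
  dec : SK -> bool -> 'M[C]_dCT
}.
Arguments SK {C} S : rename.
Arguments PK {C} S : rename.
Arguments dK {C} S : rename.
Arguments dCT {C} S : rename.
Arguments skgen {C} S _ : rename.
Arguments pkgen {C} S _ _ : rename.
Arguments enc {C} S _ _ : rename.
Arguments dec {C} S _ _ : rename.

Definition wf_qpke (C : numClosedFieldType) (S : qpke C) : Prop :=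
  [/\ distribution (skgen S),
      (forall sk, (forall pk, psdmx (pkgen S sk pk)) /\
                  \sum_pk \tr (pkgen S sk pk) = 1),
      (forall pk m, is_channel (enc S pk m)) &
      (forall sk, povm2 (dec S sk))].

Definition success_prob (C : numClosedFieldType) (S : qpke C) (m : bool) : C :=
  \sum_sk skgen S sk *
    \sum_pk \tr (dec S sk m *m apply_channel (enc S pk m) (pkgen S sk pk)).

Definition correct (C : numClosedFieldType) (S : qpke C) : Prop :=
  forall m, success_prob S m = 1.

(* An adversary with internal register of dimension dA: for each classical
   public key pk, a channel from the public-key register (dim dK) to
   (modified public-key register) (x) (internal register), dim dK * dA. *)
Definition adversary (C : numClosedFieldType) (S : qpke C) (dA : nat) :=
  PK S -> seq 'M[C]_(dK S * dA, dK S).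

Definition is_adversary (C : numClosedFieldType) (S : qpke C) dA
  (A : adversary S dA) : Prop := forall pk, is_channel (A pk).

(* Output of Exp^A(1^lambda, m): joint state of ct and the internal register;
   Enc(., pk, m) uses the original pk and acts on the returned register. *)
Definition exp_out (C : numClosedFieldType) (S : qpke C) dA (A : adversary S dA)
  (m : bool) : 'M[C]_(dCT S * dA) :=
  \sum_sk skgen S sk *:
    \sum_pk apply_channel (tens_id dA (enc S pk m))
                          (apply_channel (A pk) (pkgen S sk pk)).

(* Main.v *)
Require Import Defs.
From mathcomp Require Import all_boot all_order all_algebra.
From mathcomp Require Import mxtens spectral sesquilinear ring.
Set Implicit Arguments.
Unset Strict Implicit.
Unset Printing Implicit Defensive.
Import Order.TTheory GRing.Theory Num.Theory.
Local Open Scope ring_scope.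

Lemma mxadjM (C : numClosedFieldType) m n p (A : 'M[C]_(m, n)) (B : 'M[C]_(n, p)) :
  mxadj (A *m B) = mxadj B *m mxadj A.
Proof. by rewrite /mxadj map_mxM trmx_mul. Qed.

Lemma mxadjK (C : numClosedFieldType) m n (A : 'M[C]_(m, n)) : mxadj (mxadj A) = A.
Proof. by apply/matrixP=> i j; rewrite !mxE conjCK. Qed.

Lemma mxadjD (C : numClosedFieldType) m n (A B : 'M[C]_(m, n)) :
  mxadj (A + B) = mxadj A + mxadj B.
Proof. by apply/matrixP=> i j; rewrite !mxE rmorphD. Qed.

Lemma mxadjN (C : numClosedFieldType) m n (A : 'M[C]_(m, n)) :
  mxadj (- A) = - mxadj A.
Proof. by apply/matrixP=> i j; rewrite !mxE rmorphN. Qed.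

Lemma mxadjZ (C : numClosedFieldType) m n (c : C) (A : 'M[C]_(m, n)) :
  mxadj (c *: A) = c^* *: mxadj A.
Proof. by apply/matrixP=> i j; rewrite !mxE rmorphM. Qed.

Lemma mxadj1 (C : numClosedFieldType) n : mxadj (1%:M : 'M[C]_n) = 1%:M.
Proof. by apply/matrixP=> i j; rewrite !mxE rmorph_nat eq_sym. Qed.

Lemma mxadjE (C : numClosedFieldType) m n (A : 'M[C]_(m, n)) :
  mxadj A = (A ^t* )%sesqui.
Proof. by rewrite /mxadj map_trmx. Qed.

Lemma mxadj_tens (C : numClosedFieldType) m n p q (A : 'M[C]_(m, n)) (B : 'M[C]_(p, q)) :
  mxadj (A *t B) = mxadj A *t mxadj B.
Proof. by apply/matrixP=> i j; rewrite !mxE rmorphM. Qed.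

Lemma mxadj_sum (C : numClosedFieldType) m n (I : Type) (r : seq I) (P : pred I)
  (F : I -> 'M[C]_(m, n)) :
  mxadj (\sum_(i <- r | P i) F i) = \sum_(i <- r | P i) mxadj (F i).
Proof.
elim/big_rec2: _ => [|i x y _ <-]; last by rewrite mxadjD.
by apply/matrixP=> i j; rewrite !mxE rmorph0.
Qed.

Definition form (C : numClosedFieldType) n (A : 'M[C]_n) (u w : 'rV[C]_n) : C :=
  (u *m A *m mxadj w) 0 0.

Lemma formDl (C : numClosedFieldType) n (A : 'M[C]_n) u v w :
  form A (u + v) w = form A u w + form A v w.
Proof. by rewrite /form !mulmxDl mxE. Qed.

Lemma formDr (C : numClosedFieldType) n (A : 'M[C]_n) u v w :
  form A w (u + v) = form A w u + form A w v.
Proof. by rewrite /form mxadjD !mulmxDr mxE. Qed.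

Lemma formZl (C : numClosedFieldType) n (A : 'M[C]_n) c u w :
  form A (c *: u) w = c * form A u w.
Proof. by rewrite /form -!scalemxAl mxE. Qed.

Lemma formZr (C : numClosedFieldType) n (A : 'M[C]_n) c u w :
  form A w (c *: u) = c^* * form A w u.
Proof. by rewrite /form mxadjZ -!scalemxAr mxE. Qed.

Lemma form_delta (C : numClosedFieldType) n (A : 'M[C]_n) i j :
  form A (delta_mx 0 i) (delta_mx 0 j) = A i j.
Proof.
rewrite /form -rowE.
have -> : mxadj (delta_mx 0 j : 'rV[C]_n) = delta_mx j 0.
  by apply/matrixP=> a b; rewrite !mxE rmorph_nat andbC.
by rewrite -colE !mxE.
Qed.

Lemma psd_real (C : numClosedFieldType) n (A : 'M[C]_n) u :
  psdmx A -> (form A u u)^* = form A u u.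
Proof. by move=> /(_ u) /ger0_real /conj_Creal. Qed.

Lemma herm_aux (C : numClosedFieldType) (a b x y : C) :
  x^* = x -> y^* = y ->
  (x + a + (b + y))^* = x + a + (b + y) ->
  (x + - 'i * a + ('i * b + 'i * (- 'i * y)))^* =
     x + - 'i * a + ('i * b + 'i * (- 'i * y)) ->
  b^* = a.
Proof.
move=> hx hy; rewrite !(rmorphD, rmorphM, rmorphN) /= conjCi opprK hx hy => h1 h2.
have key : (x + a^* + (b^* + y)) - (x + a + (b + y)) +
   'i * ((x + 'i * a^* + (- 'i * b^* + - 'i * ('i * y))) -
         (x + - 'i * a + ('i * b + 'i * (- 'i * y)))) =
   (b^* - a) * 2 + ('i ^+ 2 + 1) * (a^* - b^* + a - b).
  by ring.
move: key; rewrite h1 h2 !subrr mulr0 addr0 sqrCi addNr mul0r addr0.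
move/esym/eqP; rewrite mulf_eq0 pnatr_eq0 orbF subr_eq0.
by move/eqP.
Qed.

Lemma psd_herm (C : numClosedFieldType) n (A : 'M[C]_n) :
  psdmx A -> mxadj A = A.
Proof.
move=> psdA; apply/matrixP=> i j; rewrite !mxE.
set ei := (delta_mx 0 i : 'rV[C]_n); set ej := (delta_mx 0 j : 'rV[C]_n).
have h1 := psd_real (ei + ej) psdA.
have h2 := psd_real (ei + 'i *: ej) psdA.
have hi := psd_real ei psdA.
have hj := psd_real ej psdA.
move: h1 h2 hi hj.
rewrite !(formDl, formDr, formZl, formZr) !form_delta conjCi.
move=> h1 h2 hi hj.
exact: (herm_aux hi hj h1 h2).
Qed.
Lemma herm_normal (C : numClosedFieldType) n (A : 'M[C]_n) :
  mxadj A = A -> A \is normalmx.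
Proof. by move=> hA; rewrite qualifE -mxadjE hA. Qed.

Lemma herm_spectral (C : numClosedFieldType) n (A : 'M[C]_n) :
  mxadj A = A ->
  [/\ A = mxadj (spectralmx A) *m diag_mx (spectral_diag A) *m spectralmx A,
      spectralmx A *m mxadj (spectralmx A) = 1%:M &
      mxadj (spectralmx A) *m spectralmx A = 1%:M].
Proof.
move=> hA; have hU := spectral_unitarymx A.
have h1 : spectralmx A *m mxadj (spectralmx A) = 1%:M.
  by rewrite mxadjE; apply/unitarymxP.
split=> //; last exact: mulmx1C.
by rewrite mxadjE -invmx_unitary //; apply/orthomx_spectralP/herm_normal.
Qed.

Lemma diag_form (C : numClosedFieldType) m n (B : 'M[C]_(m, n)) (A : 'M[C]_n) i :
  (B *m A *m mxadj B) i i = form A (row i B) (row i B).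
Proof.
by rewrite /form -row_mul !mxE; apply: eq_bigr => k _; rewrite !mxE.
Qed.

Lemma spectral_diag_eq (C : numClosedFieldType) n (A : 'M[C]_n) :
  mxadj A = A ->
  spectralmx A *m A *m mxadj (spectralmx A) = diag_mx (spectral_diag A).
Proof.
move=> /herm_spectral [hA h1 h2].
set P := spectralmx A in hA h1 h2 *; set d := spectral_diag A in hA *.
by rewrite [in LHS]hA !mulmxA h1 mul1mx -!mulmxA h1 mulmx1.
Qed.

Lemma psd_diag_ge0 (C : numClosedFieldType) n (A : 'M[C]_n) i :
  psdmx A -> 0 <= spectral_diag A 0 i.
Proof.
move=> hA; have := spectral_diag_eq (psd_herm hA).
move/matrixP/(_ i i); rewrite diag_form mxE eqxx mulr1n => <-.
exact: hA.
Qed.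

Lemma psd_tr_ge0 (C : numClosedFieldType) n (A : 'M[C]_n) :
  psdmx A -> 0 <= \tr A.
Proof.
move=> hA; rewrite /mxtrace sumr_ge0 // => i _.
rewrite -form_delta; exact: hA.
Qed.

Lemma psd_tr_mul_ge0 (C : numClosedFieldType) n (A B : 'M[C]_n) :
  psdmx A -> psdmx B -> 0 <= \tr (A *m B).
Proof.
move=> hA hB; have [eA h1 h2] := herm_spectral (psd_herm hA).
rewrite eA -!mulmxA mxtrace_mulC -!mulmxA mxtrace_mulC !mulmxA.
rewrite mxtrace_mulC mul_diag_mx /mxtrace sumr_ge0 // => i _.
rewrite mxE mulr_ge0 ?psd_diag_ge0 // diag_form; exact: hB.
Qed.

Lemma psd_conj (C : numClosedFieldType) m n (K : 'M[C]_(m, n)) (A : 'M[C]_n) :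
  psdmx A -> psdmx (K *m A *m mxadj K).
Proof.
move=> hA v; have := hA (v *m K).
by rewrite mxadjM !mulmxA.
Qed.

Lemma psd0 (C : numClosedFieldType) n : psdmx (0 : 'M[C]_n).
Proof. by move=> v; rewrite mulmx0 mul0mx mxE. Qed.

Lemma psdD (C : numClosedFieldType) n (A B : 'M[C]_n) :
  psdmx A -> psdmx B -> psdmx (A + B).
Proof. by move=> hA hB v; rewrite mulmxDr mulmxDl mxE addr_ge0. Qed.

Lemma psdZ (C : numClosedFieldType) n (c : C) (A : 'M[C]_n) :
  0 <= c -> psdmx A -> psdmx (c *: A).
Proof. by move=> hc hA v; rewrite -scalemxAr -scalemxAl mxE mulr_ge0. Qed.

Lemma psd_sum (C : numClosedFieldType) n (I : Type) (r : seq I) (P : pred I)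
  (F : I -> 'M[C]_n) :
  (forall i, P i -> psdmx (F i)) -> psdmx (\sum_(i <- r | P i) F i).
Proof.
move=> hF; elim/big_rec: _ => [|i x Pi hx]; first exact: psd0.
exact: psdD (hF _ Pi) hx.
Qed.

Lemma psd_channel (C : numClosedFieldType) n m (ks : seq 'M[C]_(m, n)) rho :
  psdmx rho -> psdmx (apply_channel ks rho).
Proof. by move=> h; apply: psd_sum => K _; apply: psd_conj. Qed.

Lemma tr_sum (C : numClosedFieldType) n (I : Type) (r : seq I) (P : pred I)
  (F : I -> 'M[C]_n) :
  \tr (\sum_(i <- r | P i) F i) = \sum_(i <- r | P i) \tr (F i).
Proof. elim/big_rec2: _ => [|i x y _ <-]; [exact: mxtrace0 | exact: mxtraceD]. Qed.

Lemma tr_channel (C : numClosedFieldType) n m (ks : seq 'M[C]_(m, n)) rho :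
  is_channel ks -> \tr (apply_channel ks rho) = \tr rho.
Proof.
move=> hks; rewrite /apply_channel tr_sum.
under eq_bigr => K _ do rewrite mxtrace_mulC mulmxA.
by rewrite -tr_sum -mulmx_suml hks mul1mx.
Qed.

Lemma channelZ (C : numClosedFieldType) n m (ks : seq 'M[C]_(m, n)) c rho :
  apply_channel ks (c *: rho) = c *: apply_channel ks rho.
Proof.
rewrite /apply_channel scaler_sumr; apply: eq_bigr => K _.
by rewrite -scalemxAr -scalemxAl.
Qed.

Lemma mxadj_delta (C : numClosedFieldType) m n (i : 'I_m) (j : 'I_n) :
  mxadj (delta_mx i j : 'M[C]_(m, n)) = delta_mx j i.
Proof. by apply/matrixP=> a b; rewrite !mxE rmorph_nat andbC. Qed.

Lemma delta_sandwich (C : numClosedFieldType) m n p (a : 'I_m) (j j' : 'I_n)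
  (a' : 'I_p) (B : 'M[C]_n) :
  delta_mx a j *m B *m delta_mx j' a' = B j j' *: delta_mx a a'.
Proof.
rewrite -(mul_delta_mx (0 : 'I_1) a j) -(mul_delta_mx (0 : 'I_1) j' a').
rewrite -!mulmxA (mulmxA _ B) -rowE (mulmxA _ _ (delta_mx 0 a')) -colE.
rewrite [col _ _]mx11_scalar mul_scalar_mx -scalemxAr mul_delta_mx.
by rewrite !mxE.
Qed.

Lemma sqrt_conj_mul (C : numClosedFieldType) (x : C) :
  0 <= x -> (sqrtC x)^* * sqrtC x = x.
Proof. by move=> hx; rewrite conj_Creal ?sqrtC_real // -expr2 sqrtCK. Qed.

Lemma sqrt_mul_conj (C : numClosedFieldType) (x : C) :
  0 <= x -> sqrtC x * (sqrtC x)^* = x.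
Proof. by move=> hx; rewrite mulrC sqrt_conj_mul. Qed.

Definition rep_kraus (C : numClosedFieldType) n (tau : 'M[C]_n) : seq 'M[C]_(n, n) :=
  [seq mxadj (spectralmx tau) *m
        (sqrtC (spectral_diag tau 0 q.1) *: delta_mx q.1 q.2)
  | q <- index_enum ('I_n * 'I_n)%type].

Lemma replace_channel (C : numClosedFieldType) n (tau : 'M[C]_n) :
  psdmx tau -> \tr tau = 1 ->
    is_channel (rep_kraus tau) /\
    forall rho, apply_channel (rep_kraus tau) rho = \tr rho *: tau.
Proof.
move=> hpsd htr; rewrite /rep_kraus; have [eA h1 h2] := herm_spectral (psd_herm hpsd).
have hd : forall a, 0 <= spectral_diag tau 0 a by move=> a; exact: psd_diag_ge0.
set P := spectralmx tau in eA h1 h2; set d := spectral_diag tau in eA hd.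
pose K (q : 'I_n * 'I_n) := mxadj P *m (sqrtC (d 0 q.1) *: delta_mx q.1 q.2).
rewrite -/(K _); split.
  rewrite /is_channel big_map.
  have term : forall a j, mxadj (K (a, j)) *m K (a, j) = d 0 a *: delta_mx j j.
    move=> a j; rewrite /K mxadjM mxadjK mxadjZ mxadj_delta -mulmxA.
    rewrite (mulmxA P) h1 mul1mx -scalemxAl -scalemxAr scalerA mul_delta_mx.
    by rewrite sqrt_conj_mul.
  have -> : \sum_(q <- index_enum ('I_n * 'I_n)%type) mxadj (K q) *m K q
        = \sum_(q : 'I_n * 'I_n) d 0 q.1 *: delta_mx q.2 q.2.
    by apply: eq_bigr => [[a j]] _; rewrite term.
  rewrite -(pair_bigA _ (fun a j => d 0 a *: delta_mx j j)) /=.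
  under eq_bigr => a _ do rewrite -scaler_sumr -mx1_sum_delta.
  rewrite -scaler_suml -mxtrace_diag.
  suff -> : \tr (diag_mx d) = \tr tau by rewrite htr scale1r.
  by rewrite eA mxtrace_mulC mulmxA h1 mul1mx.
move=> rho; rewrite /apply_channel big_map.
have term : forall a j, K (a, j) *m rho *m mxadj (K (a, j)) =
    (d 0 a * rho j j) *: (mxadj P *m delta_mx a a *m P).
  move=> a j; rewrite /K /= mxadjM mxadjK mxadjZ mxadj_delta.
  rewrite -!scalemxAr -!scalemxAl -!scalemxAr !scalerA.
  have e : mxadj P *m delta_mx a j *m rho *m (delta_mx j a *m P) =
           mxadj P *m (delta_mx a j *m rho *m delta_mx j a) *m P by rewrite !mulmxA.
  rewrite e delta_sandwich -scalemxAr -scalemxAl scalerA sqrt_mul_conj //.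
have -> : \sum_(q <- index_enum ('I_n * 'I_n)%type) K q *m rho *m mxadj (K q)
      = \sum_(q : 'I_n * 'I_n) (d 0 q.1 * rho q.2 q.2) *:
            (mxadj P *m delta_mx q.1 q.1 *m P).
  by apply: eq_bigr => [[a j]] _; rewrite term.
rewrite -(pair_bigA _ (fun a j => (d 0 a * rho j j) *:
            (mxadj P *m delta_mx a a *m P))) /=.
under eq_bigr => a _ do rewrite -scaler_suml -mulr_sumr.
rewrite eA diag_mx_sum_delta mulmx_sumr mulmx_suml scaler_sumr.
apply: eq_bigr => a _.
by rewrite -scalemxAr -scalemxAl scalerA mulrC.
Qed.

Lemma sum_tens (V : nmodType) m d (F : 'I_(m * d) -> V) :
  \sum_(r : 'I_(m * d)) F r = \sum_(x : 'I_m) \sum_(y : 'I_d) F (mxtens_index (x, y)).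
Proof.
rewrite pair_bigA /= (reindex (@mxtens_index m d)) /=.
  by apply: eq_bigr => -[x y] _.
by exists (@mxtens_unindex m d) => r _; [apply: mxtens_indexK | apply: mxtens_unindexK].
Qed.

Definition emb (C : numClosedFieldType) m d n (k : 'I_d) (G : 'M[C]_(m, n)) :
  'M[C]_(m * d, n) :=
  \matrix_(r, c) (((mxtens_unindex r).2 == k)%:R * G (mxtens_unindex r).1 c).

Lemma emb_mul (C : numClosedFieldType) m d n p (k : 'I_d) (G : 'M[C]_(m, n))
  (B : 'M[C]_(n, p)) : emb k G *m B = emb k (G *m B).
Proof.
apply/matrixP=> r c; rewrite !mxE mulr_sumr; apply: eq_bigr => l _.
by rewrite !mxE mulrA.
Qed.

Lemma emb_adj (C : numClosedFieldType) m d n p (k : 'I_d) (X : 'M[C]_(m, n))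
  (H : 'M[C]_(p, n)) :
  emb k X *m mxadj (emb k H) = (X *m mxadj H) *t (delta_mx k k : 'M[C]_d).
Proof.
apply/matrixP=> r s.
case: (mxtens_indexP r) => x y; case: (mxtens_indexP s) => x' y'.
rewrite tensmxE !mxE mulr_suml; apply: eq_bigr => c _.
rewrite !mxE !mxtens_indexK /= rmorphM rmorph_nat.
case: (y == k); case: (y' == k); rewrite /= ?mul0r ?mulr0 ?mul1r ?mulr1 //.
Qed.

Lemma adj_emb (C : numClosedFieldType) m d n p (k : 'I_d) (G : 'M[C]_(m, n))
  (H : 'M[C]_(m, p)) :
  mxadj (emb k G) *m emb k H = mxadj G *m H.
Proof.
apply/matrixP=> c c'; rewrite !mxE sum_tens; apply: eq_bigr => x _.
rewrite (bigD1 k) //= big1 ?addr0.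
  by rewrite !mxE !mxtens_indexK /= eqxx rmorph1 !mul1r.
by move=> y /negbTE hy; rewrite !mxE !mxtens_indexK /= hy !mul0r mulr0.
Qed.

Lemma tensDl (C : numClosedFieldType) m n p q (A B : 'M[C]_(m, n)) (D : 'M[C]_(p, q)) :
  (A + B) *t D = A *t D + B *t D.
Proof. by apply/matrixP=> i j; rewrite !mxE mulrDl. Qed.

Lemma tensZl (C : numClosedFieldType) m n p q c (A : 'M[C]_(m, n)) (D : 'M[C]_(p, q)) :
  (c *: A) *t D = c *: (A *t D).
Proof. by apply/matrixP=> i j; rewrite !mxE mulrA. Qed.

Lemma tens_suml (C : numClosedFieldType) m n p q (I : Type) (r : seq I) (P : pred I)
  (F : I -> 'M[C]_(m, n)) (D : 'M[C]_(p, q)) :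
  (\sum_(i <- r | P i) F i) *t D = \sum_(i <- r | P i) (F i *t D).
Proof.
elim/big_rec2: _ => [|i x y _ <-]; first exact: tens0mx.
by rewrite tensDl.
Qed.

Lemma tr_tens (C : numClosedFieldType) m n (A : 'M[C]_m) (B : 'M[C]_n) :
  \tr (A *t B) = \tr A * \tr B.
Proof.
rewrite /mxtrace sum_tens mulr_suml; apply: eq_bigr => x _.
rewrite mulr_sumr; apply: eq_bigr => y _; by rewrite tensmxE.
Qed.

Lemma tens11 (C : numClosedFieldType) m n :
  (1%:M : 'M[C]_m) *t (1%:M : 'M[C]_n) = 1%:M.
Proof.
apply/matrixP=> r s.
case: (mxtens_indexP r) => x y; case: (mxtens_indexP s) => x' y'.
rewrite tensmxE !mxE (inj_eq (can_inj (@mxtens_indexK m n))) xpair_eqE.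
by case: (x == x'); case: (y == y'); rewrite /= ?mul0r ?mulr0 ?mul1r.
Qed.

Lemma tens_id_apply (C : numClosedFieldType) n m a (ks : seq 'M[C]_(m, n))
  (Y : 'M[C]_n) (Q : 'M[C]_a) :
  apply_channel (tens_id a ks) (Y *t Q) = apply_channel ks Y *t Q.
Proof.
rewrite /apply_channel /tens_id big_map tens_suml; apply: eq_bigr => K _.
by rewrite mxadj_tens mxadj1 !tensmx_mul mul1mx mulmx1.
Qed.

Lemma tens_id_channel (C : numClosedFieldType) n m a (ks : seq 'M[C]_(m, n)) :
  is_channel ks -> is_channel (tens_id a ks).
Proof.
rewrite /is_channel /tens_id big_map => hks.
under eq_bigr => K _ do rewrite mxadj_tens mxadj1 tensmx_mul mul1mx.
by rewrite -tens_suml hks tens11.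
Qed.

Lemma mxE_B (C : numClosedFieldType) m n (A B : 'M[C]_(m, n)) i j :
  (A - B) i j = A i j - B i j.
Proof. by rewrite !mxE. Qed.

Lemma trB (C : numClosedFieldType) n (A B : 'M[C]_n) : \tr (A - B) = \tr A - \tr B.
Proof. by rewrite /mxtrace -sumrB; apply: eq_bigr => i _; rewrite !mxE. Qed.

Lemma conj_tr (C : numClosedFieldType) n (P r : 'M[C]_n) :
  mxadj P *m P = 1%:M -> \tr (P *m r *m mxadj P) = \tr r.
Proof. by move=> h; rewrite mxtrace_mulC mulmxA h mul1mx. Qed.

Lemma trdist_one (C : numClosedFieldType) n (r0 r1 : 'M[C]_n) (M : bool -> 'M[C]_n) :
  psdmx r0 -> psdmx r1 -> \tr r0 = 1 -> \tr r1 = 1 -> povm2 M ->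
  \tr (M false *m r0) = 1 -> \tr (M true *m r1) = 1 -> trdist r0 r1 = 1.
Proof.
move=> p0 p1 t0 t1 [pM hM] m0 m1.
set X := r0 - r1.
have hX : mxadj X = X by rewrite /X mxadjD mxadjN !psd_herm.
have [eX h1 h2] := herm_spectral hX.
have hdg := spectral_diag_eq hX.
set P := spectralmx X in eX h1 h2 hdg; set d := spectral_diag X in eX hdg *.
have ent : forall (A : 'M[C]_n) i, (P *m A *m mxadj P) i i = form A (row i P) (row i P).
  by move=> A i; rewrite diag_form.
have hd : forall i, d 0 i = (P *m r0 *m mxadj P) i i - (P *m r1 *m mxadj P) i i.
  move=> i; have := hdg; move/matrixP/(_ i i); rewrite [diag_mx d i i]mxE eqxx mulr1n => <-.
  by rewrite /X mulmxBr mulmxBl !mxE.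
have ge : forall (A : 'M[C]_n) i, psdmx A -> 0 <= (P *m A *m mxadj P) i i.
  by move=> A i hA; rewrite ent; apply: hA.
have sm : forall (A : 'M[C]_n), \sum_i (P *m A *m mxadj P) i i = \tr A.
  by move=> A; rewrite -[RHS](conj_tr A h2).
have up : \sum_i `|d 0 i| <= 2.
  apply: (@le_trans _ _ (\sum_i ((P *m r0 *m mxadj P) i i + (P *m r1 *m mxadj P) i i))).
    apply: ler_sum => i _; rewrite hd.
    by rewrite -[X in _ <= X + _]ger0_norm ?ge // -[X in _ <= _ + X]ger0_norm ?ge // ler_normB.
  by rewrite big_split /= !sm t0 t1.
have M1 : M true = 1%:M - M false by rewrite -hM addrC addKr.
have z1 : \tr (M true *m r0) = 0 by rewrite M1 mulmxBl mul1mx trB m0 t0 subrr.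
have z0 : \tr (M false *m r1) = 0.
  have : \tr ((M false + M true) *m r1) = 1 by rewrite hM mul1mx t1.
  by rewrite mulmxDl mxtraceD m1 => /(congr1 (fun x => x - 1)); rewrite addrK subrr.
have hW : \tr ((M false - M true) *m X) = 2.
  rewrite /X mulmxBl !mulmxBr !trB m0 m1 z0 z1.
  by rewrite subr0 sub0r opprK.
have key : forall W, \tr (W *m X) = \sum_i (P *m W *m mxadj P) i i * d 0 i.
  move=> W; rewrite eX !mulmxA mxtrace_mulC !mulmxA mul_mx_diag /mxtrace.
  by apply: eq_bigr => i _; rewrite mxE.
rewrite key in hW.
have zb : forall i, `|(P *m (M false - M true) *m mxadj P) i i| <= 1.
  move=> i; rewrite mulmxBr mulmxBl mxE_B.
  have <- : (P *m M false *m mxadj P) i i + (P *m M true *m mxadj P) i i = 1.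
    have -> : (P *m M false *m mxadj P) i i + (P *m M true *m mxadj P) i i =
              (P *m (M false + M true) *m mxadj P) i i.
      by rewrite mulmxDr mulmxDl !mxE.
    by rewrite hM mulmx1 h1 mxE eqxx.
  rewrite -[X in _ <= X + _]ger0_norm ?ge // -[X in _ <= _ + X]ger0_norm ?ge //.
  exact: ler_normB.
have lo : 2 <= \sum_i `|d 0 i|.
  rewrite -[2]ger0_norm ?ler0n // -hW; apply: (le_trans (ler_norm_sum _ _ _)) => /=.
  apply: ler_sum => i _; rewrite normrM; apply: ler_piMl => //.
rewrite /trdist /trnorm -/X -/d.
have -> : \sum_i `|d 0 i| = 2 by apply/le_anti; rewrite up lo.
by rewrite mulVf // pnatr_eq0.
Qed.

Lemma psd_tens_delta (C : numClosedFieldType) n d (A : 'M[C]_n) (k : 'I_d) :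
  psdmx A -> psdmx (A *t (delta_mx k k : 'M[C]_d)).
Proof.
move=> hA.
have -> : A *t (delta_mx k k : 'M[C]_d) =
          emb k (1%:M : 'M[C]_n) *m A *m mxadj (emb k (1%:M : 'M[C]_n)).
  by rewrite emb_mul mul1mx emb_adj mxadj1 mulmx1.
exact: psd_conj.
Qed.

Lemma tensDr (C : numClosedFieldType) m n p q (A : 'M[C]_(m, n)) (B D : 'M[C]_(p, q)) :
  A *t (B + D) = A *t B + A *t D.
Proof. by apply/matrixP=> i j; rewrite !mxE mulrDr. Qed.

Lemma tens_sumr (C : numClosedFieldType) m n p q (I : Type) (r : seq I) (P : pred I)
  (F : I -> 'M[C]_(p, q)) (A : 'M[C]_(m, n)) :
  A *t (\sum_(i <- r | P i) F i) = \sum_(i <- r | P i) (A *t F i).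
Proof.
elim/big_rec2: _ => [|i x y _ <-]; first exact: tensmx0.
by rewrite tensDr.
Qed.

Lemma tr_delta (C : numClosedFieldType) n (a : 'I_n) : \tr (delta_mx a a : 'M[C]_n) = 1.
Proof.
rewrite /mxtrace (bigD1 a) //= big1 ?addr0; first by rewrite mxE !eqxx.
by move=> i /negbTE hi; rewrite mxE hi.
Qed.

Lemma trQQ (C : numClosedFieldType) n (a b : 'I_n) :
  \tr (delta_mx a a *m delta_mx b b : 'M[C]_n) = (a == b)%:R.
Proof.
rewrite mul_delta_mx_cond; case: eqP => [->|_]; first by rewrite mulr1n tr_delta.
by rewrite mulr0n mxtrace0.
Qed.

Definition Qd (T : finType) (C : numClosedFieldType) (t : T) : 'M[C]_#|T| :=
  delta_mx (enum_rank t) (enum_rank t).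

Lemma sum_Qd (T : finType) (C : numClosedFieldType) :
  \sum_(t : T) Qd C t = 1%:M.
Proof.
rewrite mx1_sum_delta (reindex (@enum_rank T)) //=.
by exists (@enum_val _ _) => x _; [apply: enum_rankK | apply: enum_valK].
Qed.

Lemma tr_blocks (T : finType) (C : numClosedFieldType) n (Dm Y : T -> 'M[C]_n)
  (w : T -> C) :
  \tr ((\sum_t Dm t *t Qd C t) *m (\sum_t w t *: (Y t *t Qd C t))) =
  \sum_t w t * \tr (Dm t *m Y t).
Proof.
rewrite mulmx_suml tr_sum; apply: eq_bigr => t _.
rewrite mulmx_sumr tr_sum (bigD1 t) //= big1 ?addr0.
  by rewrite -scalemxAr mxtraceZ tensmx_mul tr_tens /Qd trQQ eqxx mulr1.
move=> t' ht'; rewrite -scalemxAr mxtraceZ tensmx_mul tr_tens /Qd trQQ.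
by rewrite (inj_eq enum_rank_inj) eq_sym (negbTE ht') mulr0 mulr0.
Qed.

Lemma main_one (C : numClosedFieldType) (S : qpke C) :
  wf_qpke S -> correct S ->
  exists (dA : nat) (A : adversary S dA),
    is_adversary A /\
    (exists M : bool -> 'M[C]_(dCT S * dA),
        povm2 M /\ forall m, \tr (M m *m exp_out A m) = 1) /\
    trdist (exp_out A false) (exp_out A true) = 1.
Proof.
case=> [[p_ge0 p_sum] hpk henc hdec] hcorr.
set p := skgen S in p_ge0 p_sum *.
have rho_psd : forall sk pk, psdmx (pkgen S sk pk) by move=> sk pk; case: (hpk sk) => h _; exact: h.
have rho_sum : forall sk, \sum_pk \tr (pkgen S sk pk) = 1 by move=> sk; case: (hpk sk).
have corr1 : forall sk pk m, p sk * \tr (pkgen S sk pk) != 0 ->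
    \tr (dec S sk m *m apply_channel (enc S pk m) (pkgen S sk pk)) = \tr (pkgen S sk pk).
  move=> sk pk m hg.
  pose Y sk pk := apply_channel (enc S pk m) (pkgen S sk pk).
  pose t' sk pk := \tr (dec S sk (~~ m) *m Y sk pk).
  have ht' : forall sk pk, 0 <= t' sk pk.
    move=> s k; apply: psd_tr_mul_ge0; first by case: (hdec s) => h _; exact: h.
    exact/psd_channel/rho_psd.
  have hsplit : forall sk pk, \tr (dec S sk m *m Y sk pk) = \tr (pkgen S sk pk) - t' sk pk.
    move=> s k; rewrite -(tr_channel (pkgen S s k) (henc k m)) -/(Y s k).
    case: (hdec s) => _ hD.
    have hD2 : dec S s m + dec S s (~~ m) = 1%:M by case: (m); rewrite //= addrC.
    by apply/eqP; rewrite eq_sym subr_eq -mxtraceD -mulmxDl hD2 mul1mx.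
  have hc : \sum_s p s * \sum_k (\tr (pkgen S s k) - t' s k) = 1.
    rewrite -(hcorr m) /success_prob; apply: eq_bigr => s _; congr (_ * _).
    by apply: eq_bigr => k _; rewrite hsplit.
  have h0' : \sum_s \sum_k p s * t' s k = 0.
    have e : \sum_s \sum_k p s * t' s k =
        \sum_s p s * \sum_k \tr (pkgen S s k) -
        \sum_s p s * \sum_k (\tr (pkgen S s k) - t' s k).
      rewrite -sumrB; apply: eq_bigr => s _; rewrite -mulrBr -sumrB mulr_sumr.
      by apply: eq_bigr => k _; ring.
    rewrite e hc; under eq_bigr => s _ do rewrite rho_sum mulr1.
    by rewrite p_sum subrr.
  have hpos : forall s, 0 <= \sum_k p s * t' s k.
    by move=> s; apply: sumr_ge0 => k _; apply: mulr_ge0.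
  have h1 : \sum_k p sk * t' sk k = 0.
    by apply: (psumr_eq0P _ h0') => // s _; exact: hpos.
  have /eqP : p sk * t' sk pk = 0.
    by apply: (psumr_eq0P _ h1) => // k _; exact: mulr_ge0.
  rewrite mulf_eq0; case/orP => [/eqP hp|/eqP ht0]; last by rewrite -/(Y sk pk) hsplit ht0 subr0.
  by move: hg; rewrite -/p hp mul0r eqxx.
pose good sk pk := p sk * \tr (pkgen S sk pk) != 0.
have [q0 hq0] : exists q : SK S * PK S, good q.1 q.2.
  case: (pickP (fun q : SK S * PK S => good q.1 q.2)) => [q hq|hnone].
    by exists q.
  exfalso; have : \sum_sk \sum_pk p sk * \tr (pkgen S sk pk) = 0.
    apply: big1 => sk _; apply: big1 => pk _.
    by have := hnone (sk, pk); rewrite /good /= => /negbT; rewrite negbK => /eqP.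
  under eq_bigr => sk _ do rewrite -mulr_sumr rho_sum mulr1.
  by rewrite p_sum => /eqP; rewrite oner_eq0.
pose sel pk : SK S * PK S := odflt q0 [pick q | good q.1 q.2 && (q.2 == pk)].
have hsel : forall pk, good (sel pk).1 (sel pk).2.
  move=> pk; rewrite /sel; case: pickP => [q /andP [] //|_] /=; exact: hq0.
have hsel2 : forall pk sk, good sk pk -> (sel pk).2 = pk /\ good (sel pk).1 pk.
  move=> pk sk hg; rewrite /sel; case: pickP => [q /andP [hq /eqP <-] //|hn] /=.
  by have := hn (sk, pk); rewrite /= hg eqxx.
pose tau pk := (\tr (pkgen S (sel pk).1 (sel pk).2))^-1 *: pkgen S (sel pk).1 (sel pk).2.
have tau_psd : forall pk, psdmx (tau pk).
  move=> pk; apply: psdZ; last exact: rho_psd.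
  by rewrite invr_ge0 psd_tr_ge0.
have tau_tr : forall pk, \tr (tau pk) = 1.
  move=> pk; rewrite mxtraceZ mulVf //.
  by have := hsel pk; rewrite /good mulf_eq0 negb_or => /andP [].
pose dA := #|PK S|.
pose A : adversary S dA := fun pk =>
  [seq emb (enum_rank pk) G | G <- rep_kraus (tau pk)].
have A_ch : is_adversary A.
  move=> pk; rewrite /is_channel big_map.
  under eq_bigr => G _ do rewrite adj_emb.
  by case: (replace_channel (tau_psd pk) (tau_tr pk)).
have A_app : forall pk sigma, apply_channel (A pk) sigma =
    (\tr sigma *: tau pk) *t Qd C pk.
  move=> pk sigma; rewrite /apply_channel big_map.
  under eq_bigr => G _ do rewrite emb_mul emb_adj.
  rewrite -tens_suml; congr (_ *t _).
  by case: (replace_channel (tau_psd pk) (tau_tr pk)) => _ h; exact: h.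
pose w pk := \sum_sk p sk * \tr (pkgen S sk pk).
pose Y pk m := apply_channel (enc S pk m) (tau pk).
have expE : forall m, exp_out A m = \sum_pk w pk *: (Y pk m *t Qd C pk).
  move=> m; rewrite /exp_out.
  under eq_bigr => sk _ do under eq_bigr => pk _ do
     rewrite A_app tens_id_apply channelZ tensZl.
  under eq_bigr => sk _ do rewrite scaler_sumr.
  rewrite exchange_big /=; apply: eq_bigr => pk _.
  by rewrite /w scaler_suml; apply: eq_bigr => sk _; rewrite scalerA.
pose M m : 'M[C]_(dCT S * dA) := \sum_pk dec S (sel pk).1 m *t Qd C pk.
have povM : povm2 M.
  split.
    move=> b; apply: psd_sum => pk _; apply: psd_tens_delta.
    by case: (hdec (sel pk).1) => h _; exact: h.
  rewrite /M -big_split /=.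
  under eq_bigr => pk _ do rewrite -tensDl (proj2 (hdec (sel pk).1)).
  by rewrite -tens_sumr sum_Qd tens11.
have wsum : \sum_pk w pk = 1.
  rewrite /w exchange_big /=.
  under eq_bigr => sk _ do rewrite -mulr_sumr rho_sum mulr1.
  exact: p_sum.
have hM : forall m, \tr (M m *m exp_out A m) = 1.
  move=> m; rewrite expE tr_blocks -wsum; apply: eq_bigr => pk _.
  case: (eqVneq (w pk) 0) => [->|hw]; first by rewrite !mul0r.
  have [sk hg] : exists sk, good sk pk.
    case: (pickP (fun sk => good sk pk)) => [sk hg|hn]; first by exists sk.
    move: hw; rewrite /w big1 ?eqxx // => sk _.
    by have := hn sk; rewrite /good => /negbT; rewrite negbK => /eqP.
  have [e2 hg2] := hsel2 pk sk hg.
  have hnz : \tr (pkgen S (sel pk).1 pk) != 0.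
    by move: hg2; rewrite /good mulf_eq0 negb_or => /andP [].
  by rewrite /Y /tau e2 channelZ -scalemxAr mxtraceZ corr1 // mulVf ?mulr1.
have psd_out : forall m, psdmx (exp_out A m).
  move=> m; rewrite /exp_out; apply: psd_sum => sk _; apply: psdZ => //.
  apply: psd_sum => pk _; apply: psd_channel; apply: psd_channel; exact: rho_psd.
have tr_out : forall m, \tr (exp_out A m) = 1.
  move=> m; rewrite /exp_out tr_sum.
  under eq_bigr => sk _ do rewrite mxtraceZ tr_sum.
  under eq_bigr => sk _ do under eq_bigr => pk _ do
    rewrite (tr_channel _ (tens_id_channel _ (henc pk m))) (tr_channel _ (A_ch pk)).
  under eq_bigr => sk _ do rewrite rho_sum mulr1.
  exact: p_sum.
exists dA, A; split=> //; split; first by exists M.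
exact: (trdist_one (psd_out false) (psd_out true) (tr_out false) (tr_out true)
          povM (hM false) (hM true)).
Qed.

Theorem theoremA1 (C : numClosedFieldType) (S : nat -> qpke C)
  (wfS : forall lambda, wf_qpke (S lambda))
  (corrS : forall lambda, correct (S lambda)) :
  forall lambda, exists (dA : nat) (A : adversary (S lambda) dA),
    is_adversary A /\
    (exists M : bool -> 'M[C]_(dCT (S lambda) * dA),
        povm2 M /\ forall m, \tr (M m *m exp_out A m) = 1) /\
    trdist (exp_out A false) (exp_out A true) = 1.
Proof.
by move=> lambda; apply: main_one.
Qed.
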